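(* Let $\alpha_0>0$, let $N\ge 1$ be an integer, and let $\gamma_1,\dots,\gamma_N$ be distinct positive real numbers. Then: (i) The determinant \[ \Delta_N(\gamma_1,\dots,\gamma_N)=\det\left(1,\ \frac{(\gamma_\sigma)_1}{(\gamma_\sigma+\alpha_0)_1},\ \dots,\ \frac{(\gamma_\sigma)_{N-1}}{(\gamma_\sigma+\alpha_0)_{N-1}}\right)_{\sigma=1,\dots,N} \] (the $\sigma$-th row being the displayed vector) is nonzero. (ii) The linear system \[ 1+\frac{(\gamma_\sigma)_1}{(\gamma_\sigma+\alpha_0)_1}b_1+\cdots+\frac{(\gamma_\sigma)_N}{(\gamma_\sigma+\alpha_0)_N}b_N=0,\qquad \sigma=1,\dots,N, \] in the unknowns $b_1,\dots,b_N$ has a unique solution, given by \[ b_{k+1}=\sum_{\ell=k}^{N-1}(-1)^{\ell+1}\frac{(\alpha_0-1)_{\ell-k}}{(\ell-k)!}\,\frac{(\alpha_0+\ell+1)_{N-\ell-1}}{(N-\ell-1)!}\prod_{\sigma=1}^N\frac{\gamma_\sigma+\alpha_0+\ell}{\gamma_\sigma},\qquad k=0,1,\dots,N-1. \] (iii) If $\gamma_0>0$ and $\gamma_0\neq\gamma_\sigma$ for $\sigma=1,\dots,N$, then with the $b_k$ from (ii), \[ 1+\frac{(\gamma_0)_1}{(\gamma_0+\alpha_0)_1}b_1+\cdots+\frac{(\gamma_0)_N}{(\gamma_0+\alpha_0)_N}b_N\neq 0. \]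
   Context: Pochhammer symbol: $(x)_0=1$ and $(x)_n=x(x+1)\cdots(x+n-1)$ for $n\ge1$. *)

(* Defs.v *)
From HB Require Import structures.
From mathcomp Require Import all_boot all_order all_algebra.
Set Implicit Arguments. Unset Strict Implicit. Unset Printing Implicit Defensive.
Import Order.TTheory GRing.Theory Num.Theory.
Local Open Scope ring_scope.

Definition poch (R : nzRingType) (x : R) (n : nat) : R :=
  \prod_(i < n) (x + i%:R).

Definition coef (R : fieldType) (a0 g : R) (n : nat) : R :=
  poch g n / poch (g + a0) n.

(* the explicit solution b_{k+1}, for k = 0..N-1 *)
Definition bsol (R : fieldType) (N : nat) (a0 : R) (gam : 'I_N -> R) (k : nat) : R :=
  \sum_(k <= l < N)
    (-1) ^+ l.+1 * (poch (a0 - 1) (l - k) / ((l - k)`!)%:R)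
      * (poch (a0 + l.+1%:R) (N - l.+1) / ((N - l.+1)`!)%:R)
      * \prod_(s < N) ((gam s + a0 + l%:R) / gam s).

(* Main.v *)
Require Import Defs.
From HB Require Import structures.
From mathcomp Require Import all_boot all_order all_algebra.
From mathcomp Require Import ring lra.
Import Order.TTheory GRing.Theory Num.Theory.
Local Open Scope ring_scope.
Set Implicit Arguments. Unset Strict Implicit. Unset Printing Implicit Defensive.

Section Aux.
Variable R : realFieldType.
Variable a0 : R.
Hypothesis ha0 : 0 < a0.

Lemma pochD (x : R) p q : poch x (p + q) = poch x p * poch (x + p%:R) q.
Proof.
rewrite /poch big_split_ord /=; congr (_ * _); apply: eq_bigr => i _.
by rewrite natrD addrA.
Qed.

Definition rl (M j : nat) : seq R :=
  [seq - (i%:R) | i <- iota 0 j] ++ [seq - (a0 + i%:R) | i <- iota j (M - j)].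

Definition Pb (M j : nat) : {poly R} := \prod_(x <- rl M j) ('X - x%:P).

Lemma size_Pb M j : (j <= M)%N -> size (Pb M j) = M.+1.
Proof.
by move=> hj; rewrite size_prod_XsubC size_cat !size_map !size_iota subnKC.
Qed.

Lemma hornerPb M j x : (Pb M j).[x] =
  (\prod_(0 <= i < j) (x + i%:R)) * \prod_(j <= i < M) (x + (a0 + i%:R)).
Proof.
rewrite /Pb horner_prod big_cat !big_map /=; congr (_ * _).
  by rewrite /index_iota subn0; apply: eq_bigr => i _; rewrite hornerXsubC opprK.
rewrite /index_iota; apply: eq_bigr => i _; rewrite hornerXsubC opprK //.
Qed.

Lemma rootPb M j x : root (Pb M j) x = (x \in rl M j).
Proof. exact: root_prod_XsubC. Qed.


Lemma prod_pos_ne0 (g : R) j M : 0 <= g -> \prod_(j <= i < M) (g + (a0 + i%:R)) != 0.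
Proof.
move=> hg; rewrite prodf_seq_neq0; apply/allP => i _ /=.
by rewrite gt_eqF // ltr_wpDl // ltr_wpDr.
Qed.

Lemma coefE M j (g : R) : (j <= M)%N -> 0 <= g ->
  coef a0 g j = (Pb M j).[g] / (Pb M 0).[g].
Proof.
move=> hj hg; rewrite !hornerPb [X in _ / (X * _)]big_geq // mul1r.
rewrite [X in _ / X](@big_cat_nat _ _ _ j) //=.
rewrite invfM mulrACA divff ?prod_pos_ne0 // mulr1 /coef /poch !big_mkord.
by congr (_ / _); apply: eq_bigr => i _; rewrite addrA.
Qed.

Lemma Pb0 M : (Pb M 0).[0] = poch a0 M.
Proof.
rewrite hornerPb big_geq // mul1r /poch big_mkord.
by apply: eq_bigr => i _; rewrite add0r.
Qed.

Lemma Pb_root0 M j : (0 < j)%N -> (Pb M j).[0] = 0.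
Proof.
move=> hj; apply/eqP; rewrite -/(root _ _) rootPb mem_cat; apply/orP; left.
by apply/mapP; exists 0%N; rewrite ?oppr0 // mem_iota.
Qed.

Lemma size_comb M n (F : 'I_n -> nat) (c : 'I_n -> R) :
  (forall j, (F j <= M)%N) -> leq (size (\sum_(j < n) c j *: Pb M (F j))) M.+1.
Proof.
move=> hF; apply: (big_ind (fun p : {poly R} => (size p <= M.+1)%N)).
- by rewrite size_poly0.
- by move=> p q hp hq; apply: leq_trans (size_polyD _ _) _; rewrite geq_max hp hq.
- by move=> j _; apply: leq_trans (size_scale_leq _ _) _; rewrite size_Pb.
Qed.

Lemma indep M n : forall d (c : nat -> R), (n + d <= M.+1)%N ->
  \sum_(j < n) c j *: Pb M (j + d) = 0 -> forall j, (j < n)%N -> c j = 0.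
Proof.
elim: n => [|n IH] d c hnd H j hj //.
have H0 := congr1 (fun p => p.[- d%:R]) H; move: H0 => /=.
rewrite big_ord_recl horner0 hornerD horner_sum hornerZ add0n.
rewrite big1 ?addr0; last first.
  move=> i _; rewrite hornerZ; apply/eqP; rewrite mulf_eq0; apply/orP; right.
  rewrite -/(root _ _) rootPb mem_cat; apply/orP; left.
  by apply/mapP; exists d; rewrite // mem_iota /= addSn ltnS leq_addl.
have hne : (Pb M d).[- d%:R] != 0.
  rewrite hornerPb mulf_neq0 // prodf_seq_neq0; apply/allP => i; rewrite mem_iota /=.
    move=> hi; rewrite add0n in hi; rewrite addrC subr_eq0 eqr_nat; apply/eqP => E.
    by move: hi; rewrite E subn0 ltnn.
  move=> /andP[hi _]; rewrite -(ler_nat R) in hi; apply/lt0r_neq0.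
  by rewrite addrCA [-_ + _]addrC ltr_wpDr // subr_ge0.
move=> /eqP; rewrite mulf_eq0 (negbTE hne) orbF => /eqP c0.
case: j hj => [|j] hj //.
apply: (IH d.+1 (fun j => c j.+1)) => //; first by rewrite addnS -addSn.
rewrite -[RHS]H big_ord_recl /= c0 scale0r add0r.
by apply: eq_bigr => i _; rewrite addnS.
Qed.

Lemma pochS (x : R) n : poch x n.+1 = poch x n * (x + n%:R).
Proof. by rewrite /poch big_ord_recr. Qed.

Lemma poch0 (x : R) : poch x 0 = 1.
Proof. by rewrite /poch big_ord0. Qed.

Lemma vandermonde (x y : R) n :
  \sum_(j < n.+1) 'C(n, j)%:R * (poch x j * poch y (n - j)) = poch (x + y) n.
Proof.
elim: n => [|n IH].
  by rewrite big_ord_recl big_ord0 !poch0 bin0 mulr1 addr0 mul1r.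
rewrite pochS -IH mulr_suml.
have E : forall j : 'I_n.+1, 'C(n, j)%:R * (poch x j * poch y (n - j)) * (x + y + n%:R)
   = 'C(n, j)%:R * (poch x j.+1 * poch y (n - j)) + 'C(n, j)%:R * (poch x j * poch y (n - j).+1).
  move=> j; rewrite !pochS -mulrDr -mulrA; congr (_ * _).
  have hj : (j <= n)%N by rewrite -ltnS.
  rewrite natrB //; ring.
rewrite (eq_bigr _ (fun j _ => E j)) big_split /=.
rewrite big_ord_recl bin0 poch0 !mul1r subn0.
have E2 : forall i : 'I_n.+1, 'C(n.+1, lift ord0 i)%:R *
     (poch x (lift ord0 i) * poch y (n.+1 - lift ord0 i)) =
   'C(n, i)%:R * (poch x i.+1 * poch y (n - i)) + 'C(n, i.+1)%:R * (poch x i.+1 * poch y (n - i)).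
  by move=> i; rewrite lift0 binS natrD mulrDl subSS addrC.
rewrite (eq_bigr _ (fun i _ => E2 i)).
rewrite big_split /= addrCA; congr (_ + _).
rewrite [in RHS]big_ord_recl bin0 poch0 !mul1r subn0 /=; congr (_ + _).
rewrite big_ord_recr /= bin_small // mul0r addr0.
by apply: eq_bigr => i _; rewrite /bump /= add1n subnSK.
Qed.

Lemma big_shift (T : Type) (idx : T) (op : Monoid.law idx) (F : nat -> T) a j :
  \big[op/idx]_(a <= i < a + j) F i = \big[op/idx]_(i < j) F (a + i)%N.
Proof.
rewrite -{1}[a]add0n big_addn addKn big_mkord.
by apply: eq_bigr => i _; rewrite addnC.
Qed.

Lemma E_zero N k m : (k < m)%N -> (m < N)%N -> (Pb N k.+1).[-(a0 + m%:R)] = 0.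
Proof.
move=> hk hm; apply/eqP; rewrite -/(root _ _) rootPb mem_cat; apply/orP; right.
by apply/mapP; exists m; rewrite // mem_iota hk subnKC // (ltn_trans hk hm).
Qed.

Lemma E_val N m j : (m + j < N)%N ->
  (Pb N (m + j).+1).[-(a0 + m%:R)] * (j`!)%:R =
  (-1) ^+ m.+1 * poch a0 m.+1 * poch (1 - a0) j * ((N - m.+1)`!)%:R.
Proof.
move=> hmj; rewrite hornerPb -addSn (@big_cat_nat _ _ _ m.+1) //= ?leq_addr //.
rewrite -!mulrA [RHS]mulrA; congr (_ * _).
  rewrite big_nat_rev /= add0n.
  transitivity (\prod_(0 <= i < m.+1) (-1 * (a0 + i%:R))).
    apply: eq_big_nat => i /andP[_ hi]; rewrite subSS (natrB _ (hi : (i <= m)%N)); ring.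
  by rewrite big_split /= prodr_const_nat subn0 /poch big_mkord.
congr (_ * _).
  rewrite big_shift /poch; apply: eq_bigr => i _; rewrite natrD; ring.
transitivity ((\prod_(j.+1 <= i < N - m) i)%:R * (j`!)%:R : R).
  rewrite natr_prod addSn -addnS addnC big_addn; congr (_ * _).
  apply: eq_bigr => i _; rewrite natrD; ring.
rewrite -natrM; congr (_%:R).
rewrite !fact_prod subnSK; last by apply: leq_ltn_trans hmj; exact: leq_addr.
rewrite mulnC -big_cat_nat //; rewrite -ltn_subRL in hmj; exact: hmj.
Qed.

Lemma fact_neq0 n : (n`!)%:R != 0 :> R.
Proof. by rewrite pnatr_eq0 -lt0n fact_gt0. Qed.

Lemma vdm0 n : \sum_(t < n.+1) (poch (a0 - 1) (n - t) / ((n - t)`!)%:R)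
   * (poch (1 - a0) t / (t`!)%:R) = (n == 0%N)%:R.
Proof.
transitivity (\sum_(t < n.+1) 'C(n, t)%:R * (poch (1 - a0) t * poch (a0 - 1) (n - t))
   / (n`!)%:R).
  apply: eq_bigr => t _.
  have ht : (t <= n)%N by rewrite -ltnS.
  have := congr1 (fun k => k%:R : R) (bin_fact ht); rewrite /= !natrM => <-.
  have hC : 'C(n, t)%:R != 0 :> R by rewrite pnatr_eq0 -lt0n bin_gt0.
  by field; rewrite !fact_neq0 hC.
rewrite -mulr_suml vandermonde.
have -> : 1 - a0 + (a0 - 1) = 0 by ring.
case: n => [|n]; first by rewrite poch0 divr1.
by rewrite /poch big_ord_recl /= addr0 !mul0r.
Qed.

Lemma S_val N l m : (l < N)%N -> (m < N)%N ->
  \sum_(k < N) (if (k <= l)%N then poch (a0 - 1) (l - k) / ((l - k)`!)%:R else 0)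
     * (Pb N k.+1).[-(a0 + m%:R)]
  = if l == m then (-1) ^+ m.+1 * poch a0 m.+1 * ((N - m.+1)`!)%:R else 0.
Proof.
move=> hl hm; case: (ltnP l m) => hlm.
  rewrite ltn_eqF // big1 // => k _; case: ifP => hk; last by rewrite mul0r.
  by rewrite E_zero ?mulr0 // (leq_ltn_trans hk hlm).
set n := (l - m)%N; have hl' : l = (m + n)%N by rewrite subnKC.
pose F := fun k : nat => (if (k <= l)%N then poch (a0 - 1) (l - k) / ((l - k)`!)%:R else 0)
     * (Pb N k.+1).[-(a0 + m%:R)].
rewrite -(big_mkord xpredT F) (@big_cat_nat _ _ _ m) //=; last exact: ltnW.
rewrite big_nat_cond big1 ?add0r; last first.
  move=> k /andP[/andP[_ hk] _]; rewrite /F; case: ifP => _; last by rewrite mul0r.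
  by rewrite E_zero ?mulr0.
have hmn : (m + n < N)%N by rewrite -hl'.
rewrite (@big_cat_nat _ _ _ (m + n.+1)%N) //=; last by rewrite addnS.
rewrite [X in _ + X]big_nat_cond [X in _ + X]big1 ?addr0; last first.
  move=> k /andP[/andP[hk _] _]; rewrite /F ifF ?mul0r //; apply/negbTE.
  by rewrite -ltnNge hl' (leq_trans _ hk) // addnS.
rewrite big_shift.
transitivity (\sum_(t < n.+1) ((-1) ^+ m.+1 * poch a0 m.+1 * ((N - m.+1)`!)%:R) *
   ((poch (a0 - 1) (n - t) / ((n - t)`!)%:R) * (poch (1 - a0) t / (t`!)%:R))).
  apply: eq_bigr => t _.
  have ht : (t <= n)%N by rewrite -ltnS.
  rewrite /F.
  have hmt : (m + t < N)%N by apply: leq_ltn_trans hmn; rewrite leq_add2l.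
  rewrite ifT; last by rewrite hl' leq_add2l.
  rewrite hl' subnDl.
  have H := E_val hmt.
  have -> : (Pb N (m + t).+1).[- (a0 + m%:R)] =
    (-1) ^+ m.+1 * poch a0 m.+1 * poch (1 - a0) t * ((N - m.+1)`!)%:R / (t`!)%:R.
    by rewrite -H mulfK ?fact_neq0.
  by field; rewrite !fact_neq0.
rewrite -mulr_sumr vdm0 hl'.
have -> : ((m + n)%N == m) = (n == 0%N) by rewrite -{2}[m]addn0 eqn_add2l.
by case: (n == 0%N); rewrite ?mulr1 ?mulr0.
by rewrite leq_addr.
Qed.

Lemma bsolE N (gam : 'I_N -> R) k : bsol a0 gam k =
  \sum_(l < N) (if (k <= l)%N then poch (a0 - 1) (l - k) / ((l - k)`!)%:R else 0) *
    ((-1) ^+ l.+1 * (poch (a0 + l.+1%:R) (N - l.+1) / ((N - l.+1)`!)%:R)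
      * \prod_(s < N) ((gam s + a0 + l%:R) / gam s)).
Proof.
rewrite /bsol big_geq_mkord big_mkcond /=; apply: eq_bigr => l _.
by case: ifP => _; rewrite ?mul0r //; ring.
Qed.

Lemma heart N (gam : 'I_N -> R) m : (m < N)%N ->
  \sum_(k < N) bsol a0 gam k * (Pb N k.+1).[-(a0 + m%:R)] =
  poch a0 N * \prod_(s < N) ((gam s + a0 + m%:R) / gam s).
Proof.
move=> hm.
under eq_bigr => k _ do rewrite bsolE mulr_suml.
rewrite exchange_big /=.
transitivity (\sum_(l < N) ((-1) ^+ l.+1 * (poch (a0 + l.+1%:R) (N - l.+1) / ((N - l.+1)`!)%:R)
      * \prod_(s < N) ((gam s + a0 + l%:R) / gam s)) *
   (if (l == m :> nat) then (-1) ^+ m.+1 * poch a0 m.+1 * ((N - m.+1)`!)%:R else 0)).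
  apply: eq_bigr => l _; rewrite -(S_val (ltn_ord l) hm) mulr_sumr.
  by apply: eq_bigr => k _; rewrite [LHS]mulrAC [LHS]mulrC.
rewrite [in LHS](bigD1 (Ordinal hm)) //= eqxx [X in _ + X]big1 ?addr0; last first.
  move=> j hj; rewrite ifF ?mulr0 //; apply: contraNF hj => /eqP h.
  by apply/eqP; apply: val_inj.
have sg : (-1) ^+ m.+1 * (-1) ^+ m.+1 = 1 :> R by rewrite -exprMn mulrNN mulr1 expr1n.
have -> : poch a0 N = poch a0 m.+1 * poch (a0 + m.+1%:R) (N - m.+1).
  by rewrite -pochD subnKC.
set s := (-1) ^+ m.+1; set pa := poch a0 m.+1; set pb := poch _ (N - m.+1).
set C := \prod_(s < N) _; set f := ((N - m.+1)`!)%:R.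
have hf : f != 0 by apply: fact_neq0.
transitivity ((s * s) * (pa * pb * C) * (f / f)); first by field.
by rewrite sg divff // mul1r mulr1.
Qed.

Lemma D_ne0 M (g : R) : 0 <= g -> (Pb M 0).[g] != 0.
Proof. by move=> hg; rewrite hornerPb big_geq // mul1r prod_pos_ne0. Qed.

Definition cfun n (f : 'I_n -> R) (j : nat) : R := oapp f 0 (insub j).

Lemma cfunE n (f : 'I_n -> R) (i : 'I_n) : cfun f i = f i.
Proof. by rewrite /cfun valK. Qed.

Lemma fE N (b : 'I_N -> R) (g : R) : 0 <= g ->
  1 + \sum_(j < N) coef a0 g j.+1 * b j =
  (Pb N 0 + \sum_(j < N) b j *: Pb N j.+1).[g] / (Pb N 0).[g].
Proof.
move=> hg; rewrite hornerD horner_sum mulrDl divff ?D_ne0 //; congr (_ + _).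
rewrite mulr_suml; apply: eq_bigr => j _.
by rewrite (@coefE N) // hornerZ mulrC mulrA.
Qed.

Section Main.
Variables (N : nat) (gam : 'I_N -> R).
Hypothesis hinj : injective gam.
Hypothesis hpos : forall s, 0 < gam s.

Definition Pi : {poly R} := \prod_(s < N) ('X - (gam s)%:P).
Definition cT : R := poch a0 N / \prod_(s < N) (- gam s).
Definition Tp : {poly R} := cT *: Pi.
Definition Qs : {poly R} := Pb N 0 + \sum_(j < N) bsol a0 gam j *: Pb N j.+1.

Lemma prodNg_ne0 : \prod_(s < N) (- gam s) != 0.
Proof. by apply/prodf_neq0 => s _; rewrite oppr_eq0 gt_eqF. Qed.

Lemma poch_ne0 : poch a0 N != 0.
Proof.
apply/prodf_neq0 => i _; rewrite gt_eqF // ltr_wpDr //.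
Qed.

Lemma hornerTp x : Tp.[x] = cT * \prod_(s < N) (x - gam s).
Proof. by rewrite /Tp hornerZ /Pi horner_prod; congr (_ * _); apply: eq_bigr => s _; rewrite hornerXsubC. Qed.

Lemma size_Qs : (size Qs <= N.+1)%N.
Proof.
apply: leq_trans (size_polyD _ _) _; rewrite geq_max size_Pb // leqnn /=.
exact (@size_comb N N (fun j : 'I_N => j.+1) (fun j : 'I_N => bsol a0 gam j) (@ltn_ord N)).
Qed.

Lemma size_Tp : (size Tp <= N.+1)%N.
Proof.
by apply: leq_trans (size_scale_leq _ _) _; rewrite /Pi size_prod_XsubC [index_enum _]unlock -enumT size_enum_ord.
Qed.

Lemma QsT : Qs = Tp.
Proof.
apply/eqP; rewrite -subr_eq0; apply/eqP.
apply: (@roots_geq_poly_eq0 _ _ (0 :: [seq - (a0 + m%:R) | m <- iota 0 N])).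
- apply/allP => x; rewrite inE => /orP[/eqP-> | /mapP[m hm ->]];
    rewrite /root hornerD hornerN hornerTp /Qs hornerD horner_sum subr_eq0.
    rewrite Pb0 big1 ?addr0; last by move=> j _; rewrite hornerZ Pb_root0 ?mulr0.
    rewrite /cT [X in _ * X](eq_bigr (fun s => - gam s)) ?divfK ?prodNg_ne0 //.
    by move=> s _; rewrite sub0r.
  rewrite mem_iota /= in hm.
  rewrite (_ : (Pb N 0).[_] = 0) ?add0r; last first.
    apply/eqP; rewrite -/(root _ _) rootPb mem_cat; apply/orP; right.
    by apply/mapP; exists m; rewrite // mem_iota subn0.
  under eq_bigr => j _ do rewrite hornerZ.
  rewrite heart // /cT -mulrA; apply/eqP; congr (_ * _).
  rewrite mulrC -prodf_div; apply: eq_bigr => s _.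
  by field; rewrite gt_eqF.
- rewrite cons_uniq map_inj_uniq ?iota_uniq ?andbT.
    apply/mapP => -[m _ /eqP]; rewrite eq_sym oppr_eq0 gt_eqF //.
    by apply: (lt_le_trans ha0); rewrite lerDl ler0n.
  by move=> m1 m2 /oppr_inj/addrI/eqP; rewrite eqr_nat => /eqP.
- rewrite /= size_map size_iota.
  by apply: leq_trans (size_polyD _ _) _; rewrite size_polyN geq_max size_Qs size_Tp.
Qed.

Lemma Tp_root s : Tp.[gam s] = 0.
Proof. by rewrite hornerTp (bigD1 s) //= subrr mul0r mulr0. Qed.

Lemma part3 g0 : 0 < g0 -> (forall s, g0 != gam s) ->
  1 + \sum_(j < N) coef a0 g0 j.+1 * bsol a0 gam j != 0.
Proof.
move=> hg hne; rewrite (@fE N (fun j : 'I_N => bsol a0 gam j) _ (ltW hg)) -/Qs QsT hornerTp.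
rewrite mulf_neq0 ?invr_neq0 ?D_ne0 ?ltW // mulf_neq0 ?invr_neq0 ?poch_ne0 ?prodNg_ne0 //.
  by rewrite /cT mulf_neq0 ?invr_neq0 ?poch_ne0 ?prodNg_ne0.
by apply/prodf_neq0 => s _; rewrite subr_eq0 hne.
Qed.

Lemma part2 (b : 'I_N -> R) :
  (forall s : 'I_N, 1 + \sum_(j < N) coef a0 (gam s) j.+1 * b j = 0)
     <-> (forall k : 'I_N, b k = bsol a0 gam k).
Proof.
split; last first.
  move=> hb s; rewrite (@fE N b _ (ltW (hpos s))).
  rewrite (eq_bigr (fun j : 'I_N => bsol a0 gam j *: Pb N j.+1)); last by move=> j _; rewrite hb.
  by rewrite -/Qs QsT Tp_root mul0r.
move=> hb.
have Qb0 : forall s, (Pb N 0 + \sum_(j < N) b j *: Pb N j.+1).[gam s] = 0.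
  move=> s; have := hb s; rewrite (@fE N b _ (ltW (hpos s))) => /eqP.
  by rewrite mulf_eq0 invr_eq0 (negbTE (D_ne0 _ (ltW (hpos s)))) orbF => /eqP.
pose c := cfun (fun i : 'I_N => b i - bsol a0 gam i).
pose D := \sum_(j < N) c j *: Pb N (j + 1).
have hD : D = (Pb N 0 + \sum_(j < N) b j *: Pb N j.+1) - Qs.
  rewrite /Qs opprD addrACA subrr add0r -sumrB; apply: eq_bigr => j _.
  by rewrite /c cfunE addn1 scalerBl.
have D0 : D = 0.
  apply: (@roots_geq_poly_eq0 _ _ (0 :: [seq gam s | s <- enum 'I_N])).
  - apply/allP => x; rewrite inE => /orP[/eqP -> | /mapP[s _ ->]].
      rewrite /root /D horner_sum big1 // => j _.
      by rewrite hornerZ Pb_root0 ?mulr0 ?addn1.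
    by rewrite /root hD hornerD hornerN Qb0 QsT Tp_root subrr.
  - rewrite cons_uniq map_inj_uniq ?enum_uniq ?andbT //.
    by apply/mapP => -[s _ /eqP]; rewrite eq_sym gt_eqF.
  - rewrite /= size_map size_enum_ord.
    exact (@size_comb N N (fun j : 'I_N => (j + 1)%N) (fun j : 'I_N => c j)
      (fun j => eq_ind _ (fun z => (z <= N)%N) (ltn_ord j) _ (esym (addn1 j)))).
move=> k; have := @indep N N 1 c _ D0 k (ltn_ord k).
rewrite /c cfunE => /(_ _)/eqP; rewrite subr_eq0 => /(_ _)/eqP; apply.
by rewrite addn1.
Qed.

Lemma part1 : (0 < N)%N -> \det (\matrix_(s < N, j < N) coef a0 (gam s) j) != 0.
Proof.
move=> hN; rewrite -det_tr; apply/det0P => -[v vn0 hv].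
have hM : (N.-1).+1 = N := prednK hN.
pose c := cfun (fun i : 'I_N => v 0 i).
pose P := \sum_(j < N) c j *: Pb N.-1 (j + 0).
have hPs : forall s, P.[gam s] = 0.
  move=> s; have := congr1 (fun A : 'M[R]_(1, N) => A 0 s) hv; rewrite !mxE => H.
  rewrite /P horner_sum.
  transitivity ((\sum_(j < N) v 0 j * coef a0 (gam s) j) * (Pb N.-1 0).[gam s]).
    rewrite mulr_suml; apply: eq_bigr => j _.
    have hj : (j <= N.-1)%N by rewrite -ltnS hM.
    rewrite hornerZ /c cfunE addn0 (@coefE N.-1) ?ltW // -mulrA divfK ?D_ne0 ?ltW //.
  rewrite (_ : \sum_(j < N) v 0 j * coef a0 (gam s) j = 0) ?mul0r //.
  by rewrite -[RHS]H; apply: eq_bigr => j _; rewrite !mxE.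
have P0 : P = 0.
  apply: (@roots_geq_poly_eq0 _ _ [seq gam s | s <- enum 'I_N]).
  - by apply/allP => x /mapP[s _ ->]; rewrite /root hPs.
  - by rewrite map_inj_uniq ?enum_uniq.
  - rewrite size_map size_enum_ord -[X in (_ <= X)%N]hM.
    exact (@size_comb N.-1 N (fun j : 'I_N => (j + 0)%N) (fun j : 'I_N => c j)
      (fun j => eq_ind _ (fun z => (z <= N.-1)%N) (eq_ind _ (fun z => (j < z)%N) (ltn_ord j) _ (esym hM)) _ (esym (addn0 j)))).
have hv0 : v = 0.
  apply/rowP => j; rewrite mxE.
  have := @indep N.-1 N 0 c _ P0 j (ltn_ord j).
  by rewrite /c cfunE => ->; rewrite // addn0 hM.
by rewrite hv0 eqxx in vn0.
Qed.

End Main.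

End Aux.

Unset Implicit Arguments.
Set Strict Implicit.

Theorem lemma1 (R : realFieldType) (a0 : R) (N : nat) (gam : 'I_N -> R)
  (ha0 : 0 < a0) (hN : (1 <= N)%N) (hinj : injective gam)
  (hpos : forall s, 0 < gam s) :
  (* (i) *)
  \det (\matrix_(s < N, j < N) coef a0 (gam s) j) != 0
  /\
  (* (ii) : b (indexed by k : 'I_N, standing for b_{k+1}) solves the system
     iff it is the explicit formula; hence unique solution *)
  (forall b : 'I_N -> R,
     (forall s : 'I_N, 1 + \sum_(j < N) coef a0 (gam s) j.+1 * b j = 0)
     <-> (forall k : 'I_N, b k = bsol a0 gam k))
  /\
  (* (iii) *)
  (forall g0 : R, 0 < g0 -> (forall s, g0 != gam s) ->
     1 + \sum_(j < N) coef a0 g0 j.+1 * bsol a0 gam j != 0).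
Proof.
split; first exact: (@part1 R a0 ha0 N gam hinj hpos hN).
split; first by move=> b; exact: (@part2 R a0 ha0 N gam hinj hpos b).
by move=> g0; exact: (@part3 R a0 ha0 N gam hpos g0).
Qed.
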